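(* Let $\mathcal C$ be a Clifford circuit on $n$ qubits of depth $\Delta$. The accumulator $F\mapsto\overrightarrow F$ and the back-accumulator $F\mapsto\overleftarrow F$ are group automorphisms of $\overline{\mathcal P}_{n(\Delta+1)}$.
   Context: A Clifford circuit on $n$ qubits is a finite sequence of operations, each a unitary Clifford gate or a Pauli measurement, each with a level in $\{1,2,\dots\}$, operations of equal level having disjoint supports; the depth $\Delta$ is the maximal level. $\overline{\mathcal P}_N$ is the $N$-qubit Pauli group modulo the phases $\{\pm1,\pm i\}$. For $1\le\ell\le\Delta$, $U_\ell$ is the product of all unitary gates of level $\ell$ (identity if none). A fault operator $F\in\overline{\mathcal P}_{n(\Delta+1)}$ acts on qubits $(\ell+0.5,q)$, $0\le\ell\le\Delta$, $1\le q\le n$; $F_{\ell+0.5}\in\overline{\mathcal P}_n$ is its component on level $\ell+0.5$. Cumulant $\overrightarrow F$: start with $\overrightarrow F=F$; for $\ell=1,\dots,\Delta$ in increasing order replace $\overrightarrow F_{\ell+0.5}$ by $\overrightarrow F_{\ell+0.5}\cdot U_\ell\overrightarrow F_{\ell-0.5}U_\ell^{-1}$. Back-cumulant $\overleftarrow F$: start with $\overleftarrow F=F$; for $\ell=\Delta,\dots,1$ in decreasing order replace $\overleftarrow F_{\ell-0.5}$ by $\overleftarrow F_{\ell-0.5}\cdot U_\ell^{-1}\overleftarrow F_{\ell+0.5}U_\ell$. *)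

(* Defs.v *)
From mathcomp Require Import all_boot all_order all_algebra all_field.
From Stdlib Require List.
Set Implicit Arguments.
Unset Strict Implicit.
Unset Printing Implicit Defensive.
Import Order.TTheory GRing.Theory Num.Theory.
Local Open Scope ring_scope.

(* An element of P̄_n is labelled by (x,z) in (F_2^n)^2: it is the class of the
   operator X^x Z^z = ⊗_q X^{x_q} Z^{z_q} modulo the phases {±1, ±i}.
   The group law of P̄_n (product of representatives, modulo phase) is
   componentwise XOR of the labels. *)
Definition Pbar (n : nat) := {ffun 'I_n -> bool * bool}.

Definition pmul n (a b : Pbar n) : Pbar n :=
  [ffun q => (((a q).1 (+) (b q).1), ((a q).2 (+) (b q).2))].

(* bit q of the computational basis index i (qubit q <-> binary digit q) *)
Definition bit (i q : nat) : bool := odd (i %/ 2 ^ q).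

(* The matrix X^x Z^z on (C^2)^{⊗ n}, basis indexed by 'I_(2^n). *)
Definition pauli n (a : Pbar n) : 'M[algC]_(2 ^ n) :=
  \matrix_(i, j)
    (if [forall q : 'I_n, bit i q == bit j q (+) (a q).1]
     then (-1) ^+ (\sum_(q < n) ((a q).2 && bit j q))
     else 0).

Definition adjmx m (U : 'M[algC]_m) : 'M[algC]_m := map_mx Num.conj (trmx U).

Definition is_clifford k (U : 'M[algC]_(2 ^ k)) : Prop :=
  U *m adjmx U = 1%:M /\
  forall a : Pbar k, exists (b : Pbar k) (c : algC),
      U *m pauli a *m invmx U = c *: pauli b.

(* Action of conjugation P |-> U P U^{-1} on P̄_n: the class b such that
   U P_a U^{-1} is a scalar multiple of P_b (unique when U is Clifford). *)
Definition pconj n (U : 'M[algC]_(2 ^ n)) (a : Pbar n) : Pbar n :=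
  odflt a [pick b : Pbar n |
             (mxvec (U *m pauli a *m invmx U) <= mxvec (pauli b))%MS].

Lemma pow2_gt0 k : (0 < 2 ^ k)%N.
Proof. by rewrite expn_gt0. Qed.

(* index of the restriction of basis state i to the qubits of S
   (S enumerated in increasing order) *)
Definition restr n (S : {set 'I_n}) (i : nat) : 'I_(2 ^ #|S|) :=
  Ordinal (ltn_pmod (\sum_(k < #|S|) bit i (@enum_val _ (mem S) k) * 2 ^ k)%N
                    (pow2_gt0 #|S|)).

(* the n-qubit operator V ⊗ Id obtained by letting V act on the qubits of S *)
Definition embed n (S : {set 'I_n}) (V : 'M[algC]_(2 ^ #|S|)) : 'M[algC]_(2 ^ n) :=
  \matrix_(i, j)
    (if [forall q : 'I_n, (q \notin S) ==> (bit i q == bit j q)]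
     then V (restr S i) (restr S j) else 0).

Inductive operation (n : nat) :=
| Gate (lvl : nat) (S : {set 'I_n}) (V : 'M[algC]_(2 ^ #|S|))
| Meas (lvl : nat) (S : {set 'I_n}) (P : Pbar #|S|).

Definition level n (o : operation n) : nat :=
  match o with Gate l _ _ => l | Meas l _ _ => l end.

Definition support n (o : operation n) : {set 'I_n} :=
  match o with Gate _ T _ => T | Meas _ T _ => T end.

Definition circuit n := seq (operation n).

Definition is_clifford_op n (o : operation n) : Prop :=
  match o with Gate _ T V => is_clifford V | Meas _ _ _ => True end.

Definition clifford_circuit n (C : circuit n) : Prop :=
  (forall o, List.In o C -> is_clifford_op o /\ (0 < level o)%N) /\
  (forall i j : nat, (i < size C)%N -> (j < size C)%N -> i <> j ->
     forall o1 o2, List.nth_error C i = Some o1 -> List.nth_error C j = Some o2 ->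
     level o1 = level o2 -> [disjoint support o1 & support o2]).

Definition depth n (C : circuit n) : nat := \max_(o <- C) level o.

Definition gate_mx n (o : operation n) : 'M[algC]_(2 ^ n) :=
  match o with Gate _ T V => embed V | Meas _ _ _ => 1%:M end.

Definition Ulev n (C : circuit n) (l : nat) : 'M[algC]_(2 ^ n) :=
  foldr (fun o M => gate_mx o *m M) 1%:M
        [seq o <- C | (if o is Gate _ _ _ then true else false) && (level o == l)].

(* P̄_{n(Δ+1)}, with qubit (l+0.5, q) <-> (l, q); component F_{l+0.5} = F l *)
Definition Fault n (D : nat) := {ffun 'I_D.+1 -> Pbar n}.

Definition fmul n D (F G : Fault n D) : Fault n D := [ffun l => pmul (F l) (G l)].

Definition comp n D (F : Fault n D) (l : nat) : Pbar n := F (inord l).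

(* cumulant: value of the level-(l+0.5) component after the increasing sweep *)
Fixpoint cum n (C : circuit n) (F : Fault n (depth C)) (l : nat) : Pbar n :=
  match l with
  | 0 => comp F 0
  | l'.+1 => pmul (comp F l'.+1) (pconj (Ulev C l'.+1) (cum F l'))
  end.

Definition cumulant n (C : circuit n) (F : Fault n (depth C)) : Fault n (depth C) :=
  [ffun l : 'I_(depth C).+1 => cum F l].

(* back-cumulant: bcum k is the value of the level-(Δ-k+0.5) component after
   the decreasing sweep; U^{-1} P U is conjugation by invmx U *)
Fixpoint bcum n (C : circuit n) (F : Fault n (depth C)) (k : nat) : Pbar n :=
  match k with
  | 0 => comp F (depth C)
  | k'.+1 => pmul (comp F (depth C - k'.+1))
                  (pconj (invmx (Ulev C (depth C - k'))) (bcum F k'))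
  end.

Definition back_cumulant n (C : circuit n) (F : Fault n (depth C)) : Fault n (depth C) :=
  [ffun l : 'I_(depth C).+1 => bcum F (depth C - l)].

Definition fault_automorphism n D (f : Fault n D -> Fault n D) : Prop :=
  bijective f /\ forall F G, f (fmul F G) = fmul (f F) (f G).

(* Main.v *)
Require Import Defs.
From mathcomp Require Import all_boot all_order all_algebra all_field.
From mathcomp Require Import zify ring.
Require Import Defs.
Set Implicit Arguments.
Unset Strict Implicit.
Unset Printing Implicit Defensive.
Import Order.TTheory GRing.Theory Num.Theory.
Local Open Scope ring_scope.

Lemma bit0n i : bit i 0 = odd i.
Proof. by rewrite /bit expn0 divn1. Qed.

Lemma bitSn i k : bit i k.+1 = bit i./2 k.
Proof. by rewrite /bit expnS divnMA divn2. Qed.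

Definition binv m (f : 'I_m -> bool) : nat := (\sum_(q < m) f q * 2 ^ q)%N.

Lemma binvS m (f : 'I_m.+1 -> bool) :
  binv f = (f ord0 + (binv (fun k => f (lift ord0 k))).*2)%N.
Proof.
rewrite /binv big_ord_recl expn0 muln1; congr (_ + _)%N.
rewrite -muln2 big_distrl /=; apply: eq_bigr => i _.
by rewrite expnS mulnCA mulnC.
Qed.

Lemma binv_lt m f : (@binv m f < 2 ^ m)%N.
Proof.
elim: m f => [|m IH] f; first by rewrite /binv big_ord0.
rewrite binvS expnS; have := IH (fun k => f (lift ord0 k)).
case: (f ord0) => /=; lia.
Qed.

Lemma bit_binv m f (k : 'I_m) : bit (@binv m f) k = f k.
Proof.
elim: m f k => [|m IH] f k; first by case: k.
rewrite binvS; case: k => [[|k] Hk].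
  rewrite bit0n oddD odd_double addbF oddb.
  by congr f; apply: val_inj.
rewrite bitSn half_bit_double.
have Hk' : (k < m)%N by [].
have -> := IH (fun k => f (lift ord0 k)) (Ordinal Hk').
by congr f; apply: val_inj.
Qed.

Lemma binv_bit m i : (i < 2 ^ m)%N -> binv (fun q : 'I_m => bit i q) = i.
Proof.
elim: m i => [|m IH] i Hi.
  by rewrite /binv big_ord0; move: Hi; rewrite expn0; case: i.
rewrite binvS /= bit0n.
have Hh : (i./2 < 2 ^ m)%N.
  move: Hi; rewrite expnS -[in X in (X < _)%N](odd_double_half i).
  case: (odd i) => /=; rewrite -muln2; lia.
rewrite -[in RHS](odd_double_half i); congr (_ + _.*2)%N.
by rewrite -[in RHS](IH _ Hh); apply: eq_bigr => q _; rewrite /= bitSn.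
Qed.

Notation bv n := {ffun 'I_n -> bool}.

Definition fb n (u : bv n) : 'I_(2 ^ n) := Ordinal (binv_lt u).
Definition tb n (i : 'I_(2 ^ n)) : bv n := [ffun q : 'I_n => bit i q].

Lemma bit_fb n (u : bv n) (q : 'I_n) : bit (fb u) q = u q.
Proof. by rewrite /fb /= bit_binv. Qed.

Lemma fbK n : cancel (@tb n) (@fb n).
Proof.
move=> i; apply: val_inj => /=; rewrite -[RHS](binv_bit (ltn_ord i)).
by apply: eq_bigr => q _; rewrite ffunE.
Qed.

Lemma tbK n : cancel (@fb n) (@tb n).
Proof. by move=> u; apply/ffunP => q; rewrite ffunE bit_fb. Qed.

Definition mb n (M : 'M[algC]_(2 ^ n)) (u v : bv n) := M (fb u) (fb v).

Lemma mbP n (M N : 'M[algC]_(2 ^ n)) :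
  (forall u v, mb M u v = mb N u v) -> M = N.
Proof. by move=> H; apply/matrixP => i j; rewrite -(fbK i) -(fbK j); apply: H. Qed.

Lemma sum_fb n (F : 'I_(2 ^ n) -> algC) : \sum_i F i = \sum_u F (@fb n u).
Proof.
rewrite (reindex (@fb n)) //; exists (@tb n) => x _; [exact: tbK | exact: fbK].
Qed.

Lemma mb_mul n (A B : 'M[algC]_(2 ^ n)) u w :
  mb (A *m B) u w = \sum_v mb A u v * mb B v w.
Proof. by rewrite /mb mxE sum_fb. Qed.

Lemma mb_scale n c (A : 'M[algC]_(2 ^ n)) u w : mb (c *: A) u w = c * mb A u w.
Proof. by rewrite /mb mxE. Qed.

Lemma mb1 n u w : mb (1%:M : 'M[algC]_(2 ^ n)) u w = (u == w)%:R.
Proof. by rewrite /mb mxE (inj_eq (can_inj (@tbK n))). Qed.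

Definition xorv n (u x : bv n) : bv n := [ffun q => u q (+) x q].
Definition ax n (a : Pbar n) : bv n := [ffun q => (a q).1].
Definition az n (a : Pbar n) : bv n := [ffun q => (a q).2].
Definition sgn n (f : 'I_n -> bool) : algC := (-1) ^+ (\sum_(q < n) f q)%N.

Lemma mb_pauli n (a : Pbar n) w v :
  mb (pauli a) w v = if w == xorv v (ax a) then sgn (fun q => az a q && v q) else 0.
Proof.
rewrite /mb /pauli mxE.
have -> : [forall q : 'I_n, bit (fb w) q == bit (fb v) q (+) (a q).1] = (w == xorv v (ax a)).
  apply/forallP/eqP => [H|->] ; last by move=> q; rewrite !bit_fb !ffunE.
  by apply/ffunP => q; rewrite !ffunE -!bit_fb; apply/eqP/H.
by case: eqP => // _; rewrite /sgn; congr (_ ^+ _); apply: eq_bigr => q _; rewrite !ffunE bit_fb.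
Qed.

Lemma sum_pauli n (A : 'M[algC]_(2 ^ n)) (a : Pbar n) u v :
  \sum_w mb A u w * mb (pauli a) w v =
  mb A u (xorv v (ax a)) * sgn (fun q => az a q && v q).
Proof.
rewrite (bigD1 (xorv v (ax a))) //= mb_pauli eqxx big1 ?addr0 // => w /negbTE Hw.
by rewrite mb_pauli Hw mulr0.
Qed.

Section Embed.
Variables (n : nat) (S : {set 'I_n}).
Definition ev (k : 'I_#|S|) : 'I_n := @enum_val _ (mem S) k.

Definition rs T (u : {ffun 'I_n -> T}) : {ffun 'I_#|S| -> T} := [ffun k => u (ev k)].
Definition mrg T (t : {ffun 'I_n -> T}) (m : {ffun 'I_#|S| -> T}) : {ffun 'I_n -> T} :=
  [ffun q => if [pick k | ev k == q] is Some k then m k else t q].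
Definition agr (T : eqType) (u v : {ffun 'I_n -> T}) :=
  [forall q, (q \notin S) ==> (u q == v q)].

Lemma ev_in k : ev k \in S.
Proof. exact: enum_valP. Qed.

Lemma ev_inj : injective ev.
Proof. exact: enum_val_inj. Qed.

Lemma merge_ev T t m k : @mrg T t m (ev k) = m k.
Proof.
rewrite ffunE; case: pickP => [k' /eqP/ev_inj -> //|/(_ k)]; by rewrite eqxx.
Qed.

Lemma rs_merge T t m : rs (@mrg T t m) = m.
Proof. by apply/ffunP => k; rewrite ffunE merge_ev. Qed.

Lemma merge_out T t m q : q \notin S -> @mrg T t m q = t q.
Proof.
move=> Hq; rewrite ffunE; case: pickP => // k /eqP Hk.
by move: Hq; rewrite -Hk ev_in.
Qed.

Lemma agree_merge (T : eqType) t m : agr (@mrg T t m) t.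
Proof. by apply/forallP => q; apply/implyP => Hq; rewrite merge_out. Qed.

Lemma merge_rs (T : eqType) (v t : {ffun 'I_n -> T}) : agr v t -> mrg t (rs v) = v.
Proof.
move=> /forallP H; apply/ffunP => q.
case: (boolP (q \in S)) => Hq.
  have -> : q = ev (enum_rank_in Hq q) by rewrite /ev enum_rankK_in.
  by rewrite merge_ev ffunE.
by rewrite merge_out //; move/implyP: (H q) => /(_ Hq) /eqP.
Qed.

Lemma eq_split (T : eqType) (u w : {ffun 'I_n -> T}) : (u == w) = agr u w && (rs u == rs w).
Proof.
apply/eqP/andP => [->|[Ha /eqP Hr]].
  by split => //; apply/forallP => q; apply/implyP.
rewrite -(merge_rs Ha) Hr merge_rs //.
by apply/forallP => q; apply/implyP.
Qed.

Lemma sum_agree (g : bv n -> algC) t :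
  \sum_(v | agr v t) g v = \sum_m g (mrg t m).
Proof.
rewrite (reindex_onto (mrg t) (@rs bool)); last by move=> v; apply: merge_rs.
by apply: eq_bigl => m; rewrite agree_merge rs_merge eqxx.
Qed.

Lemma sum_split (f : 'I_n -> bool) :
  (\sum_(q < n) f q = \sum_(q < n | q \notin S) f q + \sum_(k < #|S|) f (ev k))%N.
Proof.
rewrite (bigID (fun q => q \notin S)) /=; congr (_ + _)%N.
rewrite (eq_bigl (fun q => q \in S)) => [|q]; last by rewrite negbK.
by rewrite big_enum_val.
Qed.

Definition sgno (f : 'I_n -> bool) : algC := (-1) ^+ (\sum_(q < n | q \notin S) f q)%N.

Lemma sgn_split (f : 'I_n -> bool) : sgn f = sgno f * sgn (fun k => f (ev k)).
Proof. by rewrite /sgn sum_split exprD. Qed.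

Lemma restr_fb (u : bv n) : restr S (fb u) = fb (rs u).
Proof.
apply: val_inj => /=; rewrite modn_small.
  by apply: eq_bigr => k _; rewrite ffunE bit_fb.
have := binv_lt (rs u); congr (_ < _)%N.
by apply: eq_bigr => k _; rewrite ffunE bit_fb.
Qed.

Lemma mb_embed (V : 'M[algC]_(2 ^ #|S|)) u v :
  mb (@embed n S V) u v = if agr u v then mb V (rs u) (rs v) else 0.
Proof.
rewrite /mb /embed mxE !restr_fb.
have -> : [forall q, (q \notin S) ==> (bit (fb u) q == bit (fb v) q)] = agr u v.
  by apply: eq_forallb => q; rewrite !bit_fb.
by [].
Qed.

End Embed.

Lemma xorvE k (u x : bv k) q : xorv u x q = u q (+) x q.
Proof. by rewrite ffunE. Qed.
Lemma axE k (a : Pbar k) q : ax a q = (a q).1.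
Proof. by rewrite ffunE. Qed.
Lemma azE k (a : Pbar k) q : az a q = (a q).2.
Proof. by rewrite ffunE. Qed.

Lemma rsE k (S : {set 'I_k}) T (u : {ffun 'I_k -> T}) j : rs S u j = u (ev j).
Proof. by rewrite ffunE. Qed.

Section Embed2.
Variables (n : nat) (S : {set 'I_n}).

Lemma agree_mergeE (u t : bv n) (m : bv #|S|) x :
  agr S u (xorv (mrg t m) x) = agr S u (xorv t x).
Proof.
apply: eq_forallb => q; case: (boolP (q \in S)) => //= Hq.
by rewrite !xorvE merge_out.
Qed.

Lemma rs_xorv (v x : bv n) : rs S (xorv v x) = xorv (rs S v) (rs S x).
Proof. by apply/ffunP => k; rewrite !ffunE. Qed.

Lemma sum_embed_r (G : bv n -> algC) (W : 'M[algC]_(2 ^ #|S|)) t :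
  \sum_v G v * mb (@embed n S W) v t = \sum_m G (mrg t m) * mb W m (rs S t).
Proof.
rewrite (eq_bigr (fun v => if agr S v t then G v * mb W (rs S v) (rs S t) else 0)); last first.
  by move=> v _; rewrite mb_embed; case: ifP; rewrite ?mulr0.
rewrite -big_mkcond sum_agree; apply: eq_bigr => m _; by rewrite rs_merge.
Qed.

Lemma embed_mul (A B : 'M[algC]_(2 ^ #|S|)) :
  @embed n S A *m @embed n S B = @embed n S (A *m B).
Proof.
apply: mbP => u t; rewrite mb_mul sum_embed_r mb_embed mb_mul.
have E : forall m : bv #|S|, agr S u (mrg t m) = agr S u t.
  move=> m; apply: eq_forallb => q; case: (boolP (q \in S)) => //= Hq.
  by rewrite merge_out.
case: ifP => Hut.
  by apply: eq_bigr => m _; rewrite mb_embed E Hut rs_merge.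
by rewrite big1 // => m _; rewrite mb_embed E Hut mul0r.
Qed.

Lemma embed1 : @embed n S 1%:M = 1%:M.
Proof.
apply: mbP => u t; rewrite mb_embed !mb1 (eq_split S).
by case: ifP => //; rewrite mb1.
Qed.

Lemma embed_conj (V W : 'M[algC]_(2 ^ #|S|)) (a : Pbar n) (b : Pbar #|S|) c :
  V *m pauli (rs S a) *m W = c *: pauli b ->
  @embed n S V *m pauli a *m @embed n S W = c *: pauli (mrg a b).
Proof.
move=> H; apply: mbP => u t.
have H1 := f_equal (fun M => mb M (rs S u) (rs S t)) H; rewrite /= mb_scale in H1.
rewrite mb_mul sum_embed_r mb_scale.
under eq_bigr do rewrite mb_mul sum_pauli mb_embed agree_mergeE rs_xorv rs_merge.
rewrite mb_mul in H1.
rewrite mb_pauli (eq_split S).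
have Eax : ax (rs S a) = rs S (ax a) by apply/ffunP => k; rewrite !ffunE.
have Eax2 : rs S (xorv t (ax (mrg a b))) = xorv (rs S t) (ax b).
  by apply/ffunP => k; rewrite rsE !xorvE !axE merge_ev rsE.
have Eag : agr S u (xorv t (ax (mrg a b))) = agr S u (xorv t (ax a)).
  by apply: eq_forallb => q; case: (boolP (q \in S)) => //= Hq; rewrite !xorvE !axE merge_out.
rewrite Eax2 Eag.
have Esg : forall m : bv #|S|, sgn (fun q => az a q && mrg t m q) =
    sgno S (fun q => az a q && t q) * sgn (fun k => az (rs S a) k && m k).
  move=> m; rewrite (sgn_split S); congr (_ * _).
    rewrite /sgno; congr (_ ^+ _); apply: eq_bigr => q Hq; by rewrite merge_out.
  by rewrite /sgn; congr (_ ^+ _); apply: eq_bigr => k _; rewrite merge_ev !azE rsE.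
have Esg2 : sgn (fun q => az (mrg a b) q && t q) =
    sgno S (fun q => az a q && t q) * sgn (fun k => az b k && rs S t k).
  rewrite (sgn_split S); congr (_ * _).
    rewrite /sgno; congr (_ ^+ _); apply: eq_bigr => q Hq; by rewrite !azE merge_out.
  by rewrite /sgn; congr (_ ^+ _); apply: eq_bigr => k _; rewrite !azE merge_ev rsE.
rewrite Esg2; move: H1; rewrite mb_pauli.
case Hg: (agr S u (xorv t (ax a))) => /=.
  move=> H1.
  transitivity (sgno S (fun q => az a q && t q) *
    \sum_m mb (V *m pauli (rs S a)) (rs S u) m * mb W m (rs S t)).
    rewrite big_distrr /=; apply: eq_bigr => m _; rewrite Esg mb_mul sum_pauli Eax; ring.
  rewrite H1; case: ifP => _; ring.
by move=> _; rewrite mulr0; apply: big1 => m _; rewrite !mul0r.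
Qed.

End Embed2.

Section Paulis.
Variable n : nat.

Lemma sgn_prod (f : 'I_n -> bool) : sgn f = \prod_q (-1) ^+ (f q : nat).
Proof.
rewrite /sgn; apply: (big_morph (fun k : nat => (-1 : algC) ^+ k)) => //.
by move=> x y; rewrite exprD.
Qed.

Lemma pmul_ax (a b : Pbar n) q : ax (pmul a b) q = ax a q (+) ax b q.
Proof. by rewrite !axE ffunE. Qed.
Lemma pmul_az (a b : Pbar n) q : az (pmul a b) q = az a q (+) az b q.
Proof. by rewrite !azE ffunE. Qed.

Lemma pauli_mul (a b : Pbar n) :
  pauli a *m pauli b = sgn (fun q => az a q && ax b q) *: pauli (pmul a b).
Proof.
apply: mbP => u t; rewrite mb_mul sum_pauli mb_scale !mb_pauli.
have -> : xorv (xorv t (ax b)) (ax a) = xorv t (ax (pmul a b)).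
  by apply/ffunP => q; rewrite !xorvE pmul_ax; case: (t q); case: (ax a q); case: (ax b q).
case: eqP => _; last by rewrite mul0r mulr0.
rewrite !sgn_prod -!big_split /=; apply: eq_bigr => q _.
rewrite xorvE pmul_az.
by case: (az a q); case: (az b q); case: (ax b q); case: (t q); rewrite /= ?expr0 ?expr1 ?mulrNN ?mulr1 ?mul1r.
Qed.

Definition zv : bv n := [ffun => false].
Definition ev1 (q : 'I_n) : bv n := [ffun q' => q' == q].

Lemma mb_pauli_x (a : Pbar n) : mb (pauli a) (ax a) zv = 1.
Proof.
rewrite mb_pauli.
have -> : xorv zv (ax a) = ax a by apply/ffunP => q; rewrite xorvE ffunE.
rewrite eqxx /sgn big1 // => q _; by rewrite /zv !ffunE andbF.
Qed.

Lemma sgn_ev1 (z : bv n) q : sgn (fun q' => z q' && ev1 q q') = (-1) ^+ (z q : nat).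
Proof.
rewrite /sgn (bigD1 q) //= big1 ?addn0; first by rewrite ffunE eqxx andbT.
by move=> q' /negbTE H; rewrite ffunE H andbF.
Qed.

Lemma pauli_neq0 (a : Pbar n) : pauli a != 0.
Proof.
apply/eqP => H; have := mb_pauli_x a; rewrite H /mb mxE => /eqP.
by rewrite eq_sym oner_eq0.
Qed.

Lemma neg1_neq1 : (-1 : algC) != 1.
Proof.
apply/eqP => H; have : (2%:R : algC) == 0.
  by rewrite -[2%N]/(1 + 1)%N natrD -{1}H addNr.
by rewrite pnatr_eq0.
Qed.

Lemma pauli_inj (a b : Pbar n) c d :
  c != 0 -> c *: pauli a = d *: pauli b -> a = b.
Proof.
move=> Hc H.
have Hx : ax a = ax b.
  have := f_equal (fun M => mb M (ax a) zv) H; rewrite /= !mb_scale mb_pauli_x mulr1.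
  rewrite mb_pauli; case: eqP => [E _|_].
    by move: E; have -> : xorv zv (ax b) = ax b by apply/ffunP => q; rewrite xorvE ffunE.
  by rewrite mulr0 => E; move: Hc; rewrite E eqxx.
have Hcd : c = d.
  have := f_equal (fun M => mb M (ax a) zv) H; rewrite /= !mb_scale mb_pauli_x mulr1.
  by rewrite Hx mb_pauli_x mulr1.
subst d.
have Hz : forall q, az a q = az b q.
  move=> q; have := f_equal (fun M => mb M (xorv (ev1 q) (ax a)) (ev1 q)) H.
  rewrite /= !mb_scale !mb_pauli Hx eqxx !sgn_ev1 => /(mulfI Hc).
  case: (az a q); case: (az b q) => //= /eqP; rewrite ?expr0 ?expr1.
    by rewrite (negbTE neg1_neq1).
  by rewrite eq_sym (negbTE neg1_neq1).
apply/ffunP => q; have := Hz q; have : ax a q = ax b q by rewrite Hx.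
rewrite !axE !azE; by case: (a q) => ? ?; case: (b q) => ? ? /= -> ->.
Qed.

Definition good (U : 'M[algC]_(2 ^ n)) :=
  U \in unitmx /\ forall a, exists b c, U *m pauli a *m invmx U = c *: pauli b.

Lemma good_nz (U : 'M[algC]_(2 ^ n)) (a b : Pbar n) c : U \in unitmx -> U *m pauli a *m invmx U = c *: pauli b -> c != 0.
Proof.
move=> Hu H; apply/eqP => Hc; move: H; rewrite Hc scale0r => H.
have : pauli a = invmx U *m (U *m pauli a *m invmx U) *m U.
  by rewrite !mulmxA mulVmx // mul1mx -mulmxA mulVmx // mulmx1.
by rewrite H mulmx0 mul0mx; apply/eqP; rewrite pauli_neq0.
Qed.

Lemma pconj_spec (U : 'M[algC]_(2 ^ n)) (a : Pbar n) : good U ->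
  exists2 c, c != 0 & U *m pauli a *m invmx U = c *: pauli (pconj U a).
Proof.
move=> [Hu HU]; have [b [c H]] := HU a.
have Hc := good_nz Hu H.
suff -> : pconj U a = b by exists c.
rewrite /pconj; case: pickP => [b' Hb'| Hn].
  move/sub_rVP: Hb' => [d]; rewrite H -linearZ /= => /(can_inj mxvecK) E.
  by rewrite (pauli_inj Hc E).
have := Hn b; rewrite H; move/negbT/negP; case; apply/sub_rVP; exists c.
by rewrite linearZ.
Qed.

Lemma pconj_hom (U : 'M[algC]_(2 ^ n)) (a b : Pbar n) : good U ->
  pconj U (pmul a b) = pmul (pconj U a) (pconj U b).
Proof.
move=> HU; have [Hu _] := HU.
have [ca Hca Ea] := pconj_spec a HU.
have [cb Hcb Eb] := pconj_spec b HU.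
have [cab Hcab Eab] := pconj_spec (pmul a b) HU.
have E1 := pauli_mul a b.
have E2 := pauli_mul (pconj U a) (pconj U b).
set s := sgn _ in E1; set s' := sgn _ in E2.
have Hs : s != 0 by rewrite /s /sgn signr_eq0.
have K : (U *m pauli a *m invmx U) *m (U *m pauli b *m invmx U)
       = s *: (U *m pauli (pmul a b) *m invmx U).
  rewrite -!mulmxA (mulmxA (invmx U) U) mulVmx // mul1mx !mulmxA -(mulmxA U) E1.
  by rewrite scalemxAl scalemxAr.
move: K; rewrite Ea Eb Eab -scalemxAl -scalemxAr E2 !scalerA => K.
by apply: (@pauli_inj _ _ (s * cab) (ca * cb * s')); rewrite ?mulf_neq0 // K.
Qed.

Lemma pconj_inj (U : 'M[algC]_(2 ^ n)) : good U -> injective (pconj U).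
Proof.
move=> HU a a' E; have [Hu _] := HU.
have [c Hc Ea] := pconj_spec a HU; have [c' Hc' Ea'] := pconj_spec a' HU.
rewrite E in Ea.
have Pa : pauli a = invmx U *m (c *: pauli (pconj U a')) *m U.
  by rewrite -Ea !mulmxA mulVmx // mul1mx -mulmxA mulVmx // mulmx1.
have Pa' : pauli a' = invmx U *m (c' *: pauli (pconj U a')) *m U.
  by rewrite -Ea' !mulmxA mulVmx // mul1mx -mulmxA mulVmx // mulmx1.
apply: (@pauli_inj _ _ c' c) => //.
by rewrite Pa Pa' -!scalemxAr -!scalemxAl !scalerA mulrC.
Qed.

Lemma good1 : good 1%:M.
Proof.
split; first exact: unitmx1.
by move=> a; exists a, 1; rewrite invmx1 mulmx1 mul1mx scale1r.
Qed.

Lemma good_mul (U V : 'M[algC]_(2 ^ n)) : good U -> good V -> good (U *m V).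
Proof.
move=> [Hu HU] [Hv HV]; split; first by rewrite unitmx_mul Hu Hv.
move=> a; have [b [c E]] := HV a; have [b' [c' E']] := HU b.
exists b', (c * c').
have -> : invmx (U *m V) = invmx V *m invmx U.
  have Huv : U *m V \in unitmx by rewrite unitmx_mul Hu Hv.
  apply: (can_inj (mulKmx Huv)); rewrite mulmxV //.
  by rewrite -mulmxA (mulmxA V) mulmxV // mul1mx mulmxV.
have -> : U *m V *m pauli a *m (invmx V *m invmx U) = U *m (V *m pauli a *m invmx V) *m invmx U.
  by rewrite !mulmxA.
by rewrite E -scalemxAr -scalemxAl E' scalerA.
Qed.

Lemma good_inv (U : 'M[algC]_(2 ^ n)) : good U -> good (invmx U).
Proof.
move=> HU; have [Hu _] := HU; split; first by rewrite unitmx_inv.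
move=> a; have [g gK ginv] := injF_bij (pconj_inj HU).
have [c Hc E] := pconj_spec (g a) HU; rewrite ginv in E.
exists (g a), c^-1; rewrite invmxK.
have : pauli (g a) = invmx U *m (c *: pauli a) *m U by rewrite -E !mulmxA mulVmx // mul1mx -mulmxA mulVmx // mulmx1.
rewrite -scalemxAr -scalemxAl => ->; by rewrite scalerA mulVf // scale1r.
Qed.

End Paulis.

Lemma good_embed n (S : {set 'I_n}) (V : 'M[algC]_(2 ^ #|S|)) :
  is_clifford V -> good (@embed n S V).
Proof.
move=> [HV1 HVc].
have Hv := (mulmx1_unit HV1).1.
have Hinv : @embed n S V *m @embed n S (invmx V) = 1%:M by rewrite embed_mul mulmxV // embed1.
have Hu := (mulmx1_unit Hinv).1.
have Ei : invmx (@embed n S V) = @embed n S (invmx V).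
  by apply: (can_inj (mulKmx Hu)); rewrite mulmxV // Hinv.
split => // a; have [b [c E]] := HVc (rs S a).
by exists (mrg a b), c; rewrite Ei; apply: embed_conj.
Qed.

Lemma good_gate n (o : operation n) : is_clifford_op o -> good (gate_mx o).
Proof. by case: o => [l S V|l S P] /=; [apply: good_embed | move=> _; apply: good1]. Qed.

Lemma good_fold n (s : seq (operation n)) (p : pred (operation n)) :
  (forall o, List.In o s -> is_clifford_op o) ->
  good (foldr (fun o M => gate_mx o *m M) 1%:M [seq o <- s | p o]).
Proof.
elim: s => [|o s IH] H /=; first exact: good1.
have IH' := IH (fun o' Ho' => H o' (or_intror Ho')).
case: (p o) => //=; apply: good_mul => //; apply: good_gate; apply: H; by left.
Qed.

Lemma good_Ulev n (C : circuit n) l : clifford_circuit C -> good (Ulev C l).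
Proof. by move=> [H _]; apply: good_fold => o Ho; have [] := H o Ho. Qed.

Section Pm.
Variable n : nat.
Lemma pmulKK (a b : Pbar n) : pmul (pmul a b) b = a.
Proof.
apply/ffunP => q; rewrite !ffunE; case: (a q) => [x1 x2]; case: (b q) => [y1 y2].
by case: x1; case: x2; case: y1; case: y2.
Qed.
Lemma pmulACA (a b c d : Pbar n) : pmul (pmul a b) (pmul c d) = pmul (pmul a c) (pmul b d).
Proof.
apply/ffunP => q; rewrite !ffunE; case: (a q) => [x1 x2]; case: (b q) => [y1 y2].
case: (c q) => [z1 z2]; case: (d q) => [w1 w2] /=.
by rewrite addbACA [x2 (+) _ (+) _]addbACA.
Qed.
End Pm.

Section Main.
Variables (n : nat) (C : circuit n).
Hypothesis HC : clifford_circuit C.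
Notation D := (depth C).

Lemma comp_fmul (F G : Fault n D) k : comp (fmul F G) k = pmul (comp F k) (comp G k).
Proof. by rewrite /comp ffunE. Qed.

Lemma cum0 (F : Fault n D) : cum F 0 = comp F 0.
Proof. reflexivity. Qed.
Lemma cumS (F : Fault n D) l : cum F l.+1 = pmul (comp F l.+1) (pconj (Ulev C l.+1) (cum F l)).
Proof. reflexivity. Qed.
Lemma bcum0 (F : Fault n D) : bcum F 0 = comp F D.
Proof. reflexivity. Qed.
Lemma bcumS (F : Fault n D) l :
  bcum F l.+1 = pmul (comp F (D - l.+1)) (pconj (invmx (Ulev C (D - l))) (bcum F l)).
Proof. reflexivity. Qed.

Lemma cum_hom (F G : Fault n D) l : cum (fmul F G) l = pmul (cum F l) (cum G l).
Proof.
elim: l => [|l IH]; first by rewrite !cum0 comp_fmul.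
rewrite !cumS IH comp_fmul (pconj_hom _ _ (good_Ulev _ HC)).
exact: pmulACA.
Qed.

Lemma bcum_hom (F G : Fault n D) l : bcum (fmul F G) l = pmul (bcum F l) (bcum G l).
Proof.
elim: l => [|l IH]; first by rewrite !bcum0 comp_fmul.
rewrite !bcumS IH comp_fmul (pconj_hom _ _ (good_inv (good_Ulev _ HC))).
exact: pmulACA.
Qed.

Definition icum (H : Fault n D) : Fault n D :=
  [ffun l : 'I_D.+1 => if (l : nat) is k.+1 then pmul (H l) (pconj (Ulev C l) (comp H k)) else H l].

Lemma comp_inord (H : Fault n D) (l : 'I_D.+1) : comp H l = H l.
Proof. by rewrite /comp inord_val. Qed.

Lemma comp_icum (H : Fault n D) k : (k <= D)%N ->
  comp (icum H) k = if k is k'.+1 then pmul (comp H k) (pconj (Ulev C k) (comp H k')) else comp H k.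
Proof.
move=> Hk; rewrite {1}/comp ffunE inordK //.
Qed.

Lemma cum_icum (H : Fault n D) k : (k <= D)%N -> cum (icum H) k = comp H k.
Proof.
elim: k => [|k IH] Hk.
  by rewrite cum0 comp_icum.
rewrite cumS IH; last by lia.
by rewrite comp_icum // pmulKK.
Qed.

Lemma icumE0 (H : Fault n D) (l : 'I_D.+1) : (l : nat) = 0%N -> icum H l = H l.
Proof. by move=> E; rewrite ffunE E. Qed.
Lemma icumES (H : Fault n D) (l : 'I_D.+1) k : (l : nat) = k.+1 ->
  icum H l = pmul (H l) (pconj (Ulev C k.+1) (comp H k)).
Proof. move=> E; rewrite ffunE E; reflexivity. Qed.

Lemma icumK : cancel (@cumulant n C) icum.
Proof.
move=> F; apply/ffunP => l.
case: l => [[|k] Hk].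
  rewrite icumE0 // ffunE cum0 /comp; apply: f_equal; apply: val_inj; by rewrite /= inordK.
rewrite (icumES _ (k := k)) // ffunE cumS.
have -> : comp (cumulant F) k = cum F k by rewrite /comp ffunE inordK //; lia.
rewrite pmulKK /comp; apply: f_equal; apply: val_inj; by rewrite /= inordK.
Qed.

Lemma cumK : cancel icum (@cumulant n C).
Proof.
move=> H; apply/ffunP => l; rewrite ffunE cum_icum ?comp_inord //.
by rewrite -ltnS.
Qed.

Definition ibcum (H : Fault n D) : Fault n D :=
  [ffun l : 'I_D.+1 => if (l : nat) == D then H l
     else pmul (H l) (pconj (invmx (Ulev C l.+1)) (comp H l.+1))].

Lemma comp_ibcum (H : Fault n D) k : (k <= D)%N ->
  comp (ibcum H) k = if k == D then comp H k
     else pmul (comp H k) (pconj (invmx (Ulev C k.+1)) (comp H k.+1)).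
Proof.
by move=> Hk; rewrite {1}/comp ffunE inordK.
Qed.

Lemma bcum_ibcum (H : Fault n D) k : (k <= D)%N -> bcum (ibcum H) k = comp H (D - k).
Proof.
elim: k => [|k IH] Hk.
  by rewrite bcum0 comp_ibcum // eqxx subn0.
rewrite bcumS IH; last by lia.
rewrite comp_ibcum; last by lia.
have -> : ((D - k.+1)%N == D) = false by apply/eqP; lia.
have -> : (D - k.+1).+1%N = (D - k)%N by lia.
by rewrite pmulKK.
Qed.

Lemma bcumK : cancel ibcum (@back_cumulant n C).
Proof.
move=> H; apply/ffunP => l; rewrite ffunE bcum_ibcum; last by lia.
have -> : (D - (D - l) = l)%N by have := ltn_ord l; lia.
exact: comp_inord.
Qed.

Lemma ibcumK : cancel (@back_cumulant n C) ibcum.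
Proof.
move=> F; apply/ffunP => l; rewrite ffunE.
case: eqP => Hl.
  rewrite ffunE Hl subnn bcum0 /comp; apply: f_equal; apply: val_inj; by rewrite /= inordK.
have Hl' := ltn_ord l.
rewrite ffunE.
have -> : (D - l = (D - l.+1).+1)%N by lia.
rewrite bcumS.
have -> : (D - (D - l.+1).+1 = l)%N by lia.
have -> : (D - (D - l.+1) = l.+1)%N by lia.
have -> : comp (back_cumulant F) l.+1 = bcum F (D - l.+1).
  by rewrite /comp ffunE inordK //; lia.
by rewrite pmulKK comp_inord.
Qed.

End Main.

Theorem mainTheorem7 (n : nat) (C : circuit n) :
  clifford_circuit C ->
  fault_automorphism (@cumulant n C) /\ fault_automorphism (@back_cumulant n C).
Proof.
move=> HC; split; split.
- by exists (@icum n C); [apply: icumK | apply: cumK].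
- by move=> F G; apply/ffunP => l; rewrite !ffunE cum_hom.
- by exists (@ibcum n C); [apply: ibcumK | apply: bcumK].
- by move=> F G; apply/ffunP => l; rewrite !ffunE bcum_hom.
Qed.
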